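(* Consider joint conditional distributions $p(A_a,B_b|a,b)$ for $a,b\in\{1,2,3\}$ and $A_a,B_b\in\{0,1\}$ such that $A_a=B_b$ with probability 1 whenever $a=b$ and $A_a\neq B_b$ with probability 1 whenever $a\neq b$. If they satisfy the no-signaling conditions that $\sum_{B_b}p(A_a,B_b|a,b)$ is independent of $b$ and $\sum_{A_a}p(A_a,B_b|a,b)$ is independent of $a$, then for all $a\neq b$: $p(0,1|a,b)=p(1,0|a,b)=\tfrac12$, and for all $a=b$: $p(0,0|a,b)=p(1,1|a,b)=\tfrac12$. *)

(* Defs.v *)
From mathcomp Require Import all_boot all_order all_algebra.
Set Implicit Arguments. Unset Strict Implicit. Unset Printing Implicit Defensive.
Import Order.TTheory GRing.Theory Num.Theory.
Local Open Scope ring_scope.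

(* A behaviour: p a b x y = p(A_a = x, B_b = y | a, b), settings a,b in 'I_3
   (i.e. {1,2,3} shifted to {0,1,2}), outcomes in bool (false = 0, true = 1). *)
Definition behaviour (R : numDomainType) := 'I_3 -> 'I_3 -> bool -> bool -> R.

Definition is_cond_distr (R : numDomainType) (p : behaviour R) : Prop :=
  (forall a b x y, 0 <= p a b x y) /\
  (forall a b, \sum_(x : bool) \sum_(y : bool) p a b x y = 1).

Definition no_signaling (R : numDomainType) (p : behaviour R) : Prop :=
  (forall a b b' x, \sum_(y : bool) p a b x y = \sum_(y : bool) p a b' x y) /\
  (forall a a' b y, \sum_(x : bool) p a b x y = \sum_(x : bool) p a' b x y).

Definition perfect_corr (R : numDomainType) (p : behaviour R) : Prop :=
  (forall a x y, x != y -> p a a x y = 0) /\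
  (forall a b x, a != b -> p a b x x = 0).

(* Main.v *)
Require Import Defs.
From mathcomp Require Import all_boot all_order all_algebra.
From mathcomp Require Import lra.
Import Order.TTheory GRing.Theory Num.Theory.
Local Open Scope ring_scope.

Lemma I3_cases (a : 'I_3) :
  a = (Ordinal (isT : 0 < 3)%N) \/ a = (Ordinal (isT : 1 < 3)%N) \/
  a = (Ordinal (isT : 2 < 3)%N).
Proof.
case: a => [[|[|[|k]]] H]; [left|right;left|right;right|by []];
  by apply/val_inj.
Qed.

Theorem mainTheorem10 (R : realFieldType) (p : behaviour R) :
  is_cond_distr p -> perfect_corr p -> no_signaling p ->
  (forall a b : 'I_3, a != b ->
     p a b false true = 1 / 2 /\ p a b true false = 1 / 2) /\
  (forall a : 'I_3,
     p a a false false = 1 / 2 /\ p a a true true = 1 / 2).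
Proof.
move=> [_ Hs] [Hd Ho] [Ha Hb].
set o0 := Ordinal (isT : 0 < 3)%N.
set o1 := Ordinal (isT : 1 < 3)%N.
set o2 := Ordinal (isT : 2 < 3)%N.
have S : forall a b, p a b false false + p a b false true +
   (p a b true false + p a b true true) = 1.
  by move=> a b; have := Hs a b; rewrite !big_bool /=; lra.
have A : forall a b b' x, p a b x false + p a b x true = p a b' x false + p a b' x true.
  by move=> a b b' x; have := Ha a b b' x; rewrite !big_bool /=; lra.
have B : forall a a' b y, p a b false y + p a b true y = p a' b false y + p a' b true y.
  by move=> a a' b y; have := Hb a a' b y; rewrite !big_bool /=; lra.
have D : forall a, p a a false true = 0 /\ p a a true false = 0.
  by move=> a; split; apply: Hd.
have O : forall a b, a != b -> p a b false false = 0 /\ p a b true true = 0.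
  by move=> a b ab; split; apply: Ho.
have n01 : o0 != o1 by []. have n10 : o1 != o0 by [].
have n02 : o0 != o2 by []. have n20 : o2 != o0 by [].
have n12 : o1 != o2 by []. have n21 : o2 != o1 by [].
have key : forall a b, (p a b false true + p a b true true = 1/2) /\
                      (p a b false false + p a b false true = 1/2).
  move=> a b.
  move: (S o0 o0) (S o1 o1) (S o2 o2) (S o0 o1) (S o1 o0) (S o0 o2) (S o2 o0)
    (S o1 o2) (S o2 o1) (D o0) (D o1) (D o2) (O _ _ n01) (O _ _ n10)
    (O _ _ n02) (O _ _ n20) (O _ _ n12) (O _ _ n21).
  move: (A o0 o0 o1 false) (A o0 o0 o2 false) (A o1 o1 o0 false) (A o1 o1 o2 false)
    (A o2 o2 o0 false) (A o2 o2 o1 false)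
    (B o0 o1 o0 false) (B o0 o2 o0 false) (B o1 o0 o1 false) (B o1 o2 o1 false)
    (B o2 o0 o2 false) (B o2 o1 o2 false).
  have [->|[->|->]] : a = o0 \/ a = o1 \/ a = o2 := I3_cases a;
  have [->|[->|->]] : b = o0 \/ b = o1 \/ b = o2 := I3_cases b;
  move=> *; repeat match goal with H : _ /\ _ |- _ => case: H => ? ? end; split; lra.
split.
  move=> a b ab; have [E1 E2] := key a b; have [Z1 Z2] := O a b ab; have := S a b.
  split; lra.
move=> a; have [E1 E2] := key a a; have [Z1 Z2] := D a; have := S a a.
split; lra.
Qed.
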